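(* Let $S$ be a set of patterns and $f_n$ the number of rooted labeled forests on $[n]$ avoiding $S$. Then $\lim_{n\to\infty}\frac{f_n^{1/n}}{n}=0$ if and only if $S$ contains the pattern $12\cdots k$ and the pattern $\ell(\ell-1)\cdots 1$ for some positive integers $k$ and $\ell$.
   Context: A rooted labeled forest on $[n]$ is an unordered forest on $n$ vertices, each component with a distinguished root, with distinct labels from $[n]$. A pattern of length $k$ is a permutation of $[k]$; an instance of it is a sequence of vertices $v_1,\dots,v_k$ with $v_i$ a strict ancestor of $v_{i+1}$ whose labels are in the same relative order as the pattern; a forest avoids $S$ if it contains no instance of any pattern in $S$. *)

(* Defs.v *)
From HB Require Import structures.
From mathcomp Require Import all_boot all_order all_algebra fingroup perm.
From mathcomp Require Import boolp classical_sets reals topology normedtype sequences exp.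
Set Implicit Arguments. Unset Strict Implicit. Unset Printing Implicit Defensive.

(* A rooted labeled forest on [n] (vertices = labels 'I_n, i.e. {0..n-1},
   order-isomorphic to [n]) is given by its parent map: parent v = None iff v is
   a root. *)
Definition parent_map (n : nat) := {ffun 'I_n -> option 'I_n}.

Definition up (n : nat) (F : parent_map n) (k : nat) (v : 'I_n) : option 'I_n :=
  iter k (fun o => obind F o) (Some v).

Definition is_forest (n : nat) (F : parent_map n) : Prop :=
  forall v : 'I_n, exists k, up F k v = None.

Definition strict_ancestor (n : nat) (F : parent_map n) (u w : 'I_n) : Prop :=
  exists k, 0 < k /\ up F k w = Some u.

Definition instance_of (n k : nat) (F : parent_map n) (p : {perm 'I_k})
  (v : 'I_k -> 'I_n) : Prop :=
  (forall i : 'I_k, forall Hi : i.+1 < k,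
      strict_ancestor F (v i) (v (Ordinal Hi))) /\
  (forall i j : 'I_k, (v i < v j) = (p i < p j)).

Definition contains (n k : nat) (F : parent_map n) (p : {perm 'I_k}) : Prop :=
  exists v, instance_of F p v.

Definition pattern_set := forall k : nat, {perm 'I_k} -> Prop.

Definition avoids (n : nat) (F : parent_map n) (S : pattern_set) : Prop :=
  forall k (p : {perm 'I_k}), S k p -> ~ contains F p.

Definition f_count (S : pattern_set) (n : nat) : nat :=
  #|[set F : parent_map n | `[< is_forest F /\ avoids F S >]]|.

Definition increasing_pattern (k : nat) : {perm 'I_k} := 1%g.
Definition decreasing_pattern (k : nat) : {perm 'I_k} := perm (@rev_ord_inj k).

(* Main.v *)
Require Import Defs.
From HB Require Import structures.
From mathcomp Require Import all_boot all_order all_algebra fingroup perm.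
From mathcomp Require Import boolp classical_sets reals topology normedtype sequences exp.
From mathcomp Require Import zify lra.
Import Order.TTheory GRing.Theory Num.Theory numFieldNormedType.Exports.
Set Implicit Arguments. Unset Strict Implicit. Unset Printing Implicit Defensive.
Section Forest.
Variables (n : nat) (F : parent_map n).
Local Notation g := (fun o : option 'I_n => obind F o).

Lemma iterN k : iter k g None = None.
Proof. by elim: k => //= k ->. Qed.

Lemma upS k v : up F k.+1 v = obind F (up F k v).
Proof. by []. Qed.

Lemma up0 v : up F 0 v = Some v.
Proof. by []. Qed.

Lemma upSr k v : up F k.+1 v = if F v is Some u then up F k u else None.
Proof. rewrite /up iterSr /=; case: (F v) => // ; exact: iterN. Qed.

Lemma up_add i j v u : up F i v = Some u -> up F (i + j) v = up F j u.
Proof. by move=> h; rewrite /up addnC iterD -/(up F i v) h. Qed.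

Lemma up_None_mono i j v : up F i v = None -> (i <= j)%N -> up F j v = None.
Proof.
move=> h lij; rewrite -(subnK lij) /up iterD -/(up F i v) h; exact: iterN.
Qed.

Lemma anc_trans u w x : strict_ancestor F u w -> strict_ancestor F w x ->
  strict_ancestor F u x.
Proof.
move=> [k1 [k10 h1]] [k2 [k20 h2]]; exists (k2 + k1); split; first lia.
by rewrite (up_add _ h2).
Qed.

Lemma no_cycle x j : is_forest F -> up F j x = Some x -> (0 < j)%N -> False.
Proof.
move=> fo h j0; have hm : forall m, up F (j * m) x = Some x.
  elim=> [|m IH]; first by rewrite muln0.
  by rewrite mulnS (up_add _ h) IH.
have [K hK] := fo x.
have := up_None_mono hK (_ : (K <= j * K)%N).
by rewrite hm => /(_ (leq_pmull _ j0)).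
Qed.

Variable cmp : rel 'I_n.
Definition erel : rel 'I_n := fun a b => `[< strict_ancestor F a b >] && cmp a b.
Definition Pch (v : 'I_n) (m : nat) : Prop :=
  exists x s, path erel x s /\ last x s = v /\ size s = m.

Variable M : nat.
Hypothesis noChain : forall x s, path erel x s -> size s = M -> False.

Lemma Pch0 v : Pch v 0.
Proof. by exists v, [::]. Qed.

Lemma Pch_lt v m : Pch v m -> (m < M)%N.
Proof.
Abort.

Definition Am (v : 'I_n) : nat := (\max_(m < M | `[< Pch v m >]) m)%N.

Lemma M_pos (v : 'I_n) : (0 < M)%N.
Proof.
case: M noChain => // h; exfalso; exact: (h v [::]).
Qed.

Lemma Am_spec v : (Am v < M)%N /\ Pch v (Am v).
Proof.
have M0 := M_pos v.
have c0 : (0 < #|(fun m : 'I_M => `[< Pch v m >])|)%N.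
  apply/card_gt0P; exists (Ordinal M0); rewrite inE; exact: (Pch0 v).
have [i0 i0P e] := @eq_bigmax_cond _ (fun m : 'I_M => `[< Pch v m >]) (fun m => nat_of_ord m) c0.
have -> : Am v = i0 by rewrite /Am -e; apply: eq_bigl => i; rewrite ?inE.
split; first exact: ltn_ord. move: i0P; rewrite unfold_in. move/asboolP. done.
Qed.

Lemma Am_ext u x : strict_ancestor F u x -> cmp u x -> (Am u < Am x)%N.
Proof.
move=> hux cux; have [lt hP] := Am_spec u.
have hx : Pch x (Am u).+1.
  case: hP => y [s [hp [hl hs]]]; exists y, (rcons s x); split.
    by rewrite rcons_path hp hl /erel cux andbT; apply/asboolP.
  by rewrite last_rcons size_rcons hs.
have lt2 : ((Am u).+1 < M)%N.
  rewrite ltn_neqAle lt andbT; apply/eqP => e.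
  case: hx => y [s [hp [_ hs]]]; apply: (noChain hp); by rewrite hs.
have := @leq_bigmax_cond _ (fun m : 'I_M => `[< Pch x m >]) (fun m => nat_of_ord m) (Ordinal lt2).
by apply; apply/asboolP.
Qed.
End Forest.

Section Inst.
Variables (n : nat) (F : parent_map n).
Definition cmpI : rel 'I_n := fun a b => (a < b)%N.
Definition cmpD : rel 'I_n := fun a b => (b < a)%N.

Lemma chain_anc (c : rel 'I_n) x s (i : nat) : path (erel F c) x s -> (i < size s)%N ->
  strict_ancestor F (nth x (x :: s) i) (nth x (x :: s) i.+1) /\ c (nth x (x :: s) i) (nth x (x :: s) i.+1).
Proof.
move=> /(pathP x) h lt; have := h i lt; rewrite /erel => /andP[/asboolP a b]; by split.
Qed.

Lemma chain_inc x s : path (erel F cmpI) x s -> contains F (increasing_pattern (size s).+1).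
Proof.
move=> hp; exists (fun i : 'I_(size s).+1 => nth x (x :: s) i); split.
  by move=> i Hi; have [] := chain_anc hp (_ : (i < size s)%N).
have so : sorted (fun a b : 'I_n => (a < b)%N) (x :: s).
  by rewrite /=; apply: sub_path hp => a b /andP[].
have hom := sorted_ltn_nth (fun y x z : 'I_n => @ltn_trans y x z) x so.
move=> i j; rewrite /increasing_pattern !perm1.
case: (ltngtP i j) => [lij|lji|/val_inj ->]; last by rewrite !ltnn.
  by apply: hom; rewrite // inE /=.
apply/negbTE; rewrite -leqNgt ltnW //; by apply: hom; rewrite // inE /=.
Qed.

Lemma chain_dec x s : path (erel F cmpD) x s -> contains F (decreasing_pattern (size s).+1).
Proof.
move=> hp; exists (fun i : 'I_(size s).+1 => nth x (x :: s) i); split.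
  by move=> i Hi; have [] := chain_anc hp (_ : (i < size s)%N).
have so : sorted (fun a b : 'I_n => (b < a)%N) (x :: s).
  by rewrite /=; apply: sub_path hp => a b /andP[].
have hom := sorted_ltn_nth (fun y x z : 'I_n => fun h1 h2 => @ltn_trans y z x h2 h1) x so.
move=> i j; rewrite /decreasing_pattern !permE /=.
have ->: (size s - i < size s - j)%N = (j < i)%N by have := ltn_ord i; have := ltn_ord j; lia.
case: (ltngtP i j) => [lij|lji|/val_inj ->]; last by rewrite !ltnn.
  apply/negbTE; rewrite -leqNgt ltnW //; by apply: hom; rewrite // inE /=.
by apply: hom; rewrite // inE /=.
Qed.
End Inst.

Lemma height_bound n (F : parent_map n) K L : is_forest F ->
  ~ contains F (increasing_pattern K.+1) -> ~ contains F (decreasing_pattern L.+1) ->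
  forall v, up F (K * L) v = None.
Proof.
move=> fo nI nD v; case e: (up F (K * L) v) => [w|] //; exfalso.
have noI : forall x s, path (erel F (@cmpI n)) x s -> size s = K -> False.
  by move=> x s hp hs; apply: nI; rewrite -hs; exact: (chain_inc hp).
have noD : forall x s, path (erel F (@cmpD n)) x s -> size s = L -> False.
  by move=> x s hp hs; apply: nD; rewrite -hs; exact: (chain_dec hp).
have sA := Am_spec noI; have sB := Am_spec noD.
pose code (x : 'I_n) : 'I_K * 'I_L := (Ordinal (proj1 (sA x)), Ordinal (proj1 (sB x))).
pose get j := odflt v (up F j v).
have some j : (j <= K * L)%N -> up F j v = Some (get j).
  move=> lj; rewrite /get; case h: (up F j v) => [a|] //.
  by move: e; rewrite (up_None_mono h lj).
have key i j : (i < j <= K * L)%N -> code (get i) != code (get j).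
  move=> /andP[lij ljK].
  have hi := some i (ltnW (leq_trans lij ljK)); have hj := some j ljK.
  have ha : up F (j - i) (get i) = Some (get j).
    by rewrite -(up_add _ hi) subnKC ?(ltnW lij).
  have anc : strict_ancestor F (get j) (get i) by exists (j - i); split => //; lia.
  have neq : get j != get i.
    apply/eqP => eq; move: ha; rewrite eq => ha; apply: (no_cycle fo ha); lia.
  case: (ltngtP (get j) (get i)) => [lt|lt|/val_inj eq]; last by rewrite eq eqxx in neq.
    have := Am_ext noI anc lt; rewrite /code => h.
    by apply/eqP => eq2; move: (congr1 (fun p => val p.1) eq2) => /= eq; rewrite eq ltnn in h.
  have := Am_ext noD anc lt; rewrite /code => h.
  by apply/eqP => eq2; move: (congr1 (fun p => val p.2) eq2) => /= eq; rewrite eq ltnn in h.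
pose gm (j : 'I_(K * L).+1) := code (get j).
have inj : injective gm.
  move=> i j; rewrite /gm => h; apply/val_inj => /=.
  case: (ltngtP i j) => [lt|lt|//].
    by have := key i j; rewrite lt -ltnS ltn_ord h eqxx => /(_ isT).
  by have := key j i; rewrite lt -ltnS ltn_ord h eqxx => /(_ isT).
have := leq_card gm inj; rewrite card_prod !card_ord; lia.
Qed.


Section Depth.
Variables (n : nat) (F : parent_map n) (H : nat).
Hypothesis hb : forall v, up F H v = None.
Definition dep (v : 'I_n) : nat := count (fun j => up F j.+1 v != None) (iota 0 H).

Lemma dep_le v : (dep v <= H)%N.
Proof. by rewrite /dep (leq_trans (count_size _ _)) // size_iota. Qed.

Lemma dep_root v : F v = None -> dep v = 0%N.
Proof.
move=> h; rewrite /dep (eq_count (a2 := pred0)) ?count_pred0 // => j.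
by rewrite upSr h.
Qed.

Lemma dep_child v u : F v = Some u -> dep v = (dep u).+1.
Proof.
move=> h; rewrite /dep.
have Hp : (0 < H)%N by case: H hb => // /(_ u); rewrite up0.
rewrite (eq_count (a2 := fun j => up F j u != None)); last by move=> j; rewrite upSr h.
case: H hb Hp => // H' hb' _.
have e1 : count (fun j => up F j u != None) (iota 0 H'.+1) =
   (count (fun j => up F j.+1 u != None) (iota 0 H')).+1.
  by rewrite /= (iotaDl 1 0) count_map.
have e2 : count (fun j => up F j.+1 u != None) (iota 0 H'.+1) =
   count (fun j => up F j.+1 u != None) (iota 0 H').
  rewrite -addn1 iotaD count_cat /= add0n.
  by rewrite -[obind F (up F H' u)]/(up F H'.+1 u) hb' /= !addn0.
by rewrite e2; exact: e1.
Qed.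
End Depth.

Section Count.
Variables (n H : nat).
Definition cW (δ : {ffun 'I_n -> 'I_H.+1}) (v : 'I_n) : nat :=
  (1 + #|[set u | (δ u).+1 == δ v]|)%N.
Definition Dfam (δ : {ffun 'I_n -> 'I_H.+1}) (v : 'I_n) : pred (option 'I_n) :=
  fun o => if o is Some u then (δ u).+1 == δ v else (δ v == 0%N :> nat).

Lemma card_D δ v : (#|Dfam δ v| <= cW δ v)%N.
Proof.
have sub : [set o | Dfam δ v o] \subset None |: (Some @: [set u | (δ u).+1 == δ v]).
  apply/fintype.subsetP => o; rewrite inE; case: o => [u|] hu; rewrite !inE //.
  by apply/orP; right; apply/finset.imsetP; exists u; rewrite ?inE.
rewrite -cardsE; apply: (leq_trans (subset_leq_card sub)).
rewrite cardsU1 card_imset; last exact: Some_inj.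
by rewrite /cW leq_add2r leq_b1.
Qed.

Lemma card_fam δ : (#|family (Dfam δ)| <= \prod_v cW δ v)%N.
Proof.
rewrite card_family foldrE big_map big_enum /=.
by apply: leq_prod => v _; exact: card_D.
Qed.

Lemma count_bound (P : parent_map n -> Prop) :
  (forall F, P F -> forall v, up F H v = None) ->
  (#|[set F | `[< P F >]]| <= \sum_(δ : {ffun 'I_n -> 'I_H.+1}) \prod_v cW δ v)%N.
Proof.
move=> hP.
have mem F : P F -> exists δ : {ffun 'I_n -> 'I_H.+1}, F \in family (Dfam δ).
  move=> PF; have hb := hP F PF.
  have dl w : (dep F H w < H.+1)%N by rewrite ltnS dep_le.
  exists [ffun v => inord (dep F H v)]; apply/familyP => v.
  rewrite unfold_in /Dfam; case e: (F v) => [u|]; rewrite !ffunE !inordK //.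
    by rewrite (@dep_child _ _ _ hb _ _ e).
  by rewrite dep_root.
apply: (@leq_trans (\sum_(δ : {ffun 'I_n -> 'I_H.+1}) #|family (Dfam δ)|)); last first.
  by apply: leq_sum => δ _; exact: card_fam.
rewrite -sum1_card.
apply: (@leq_trans (\sum_(F in [set F | `[< P F >]]) \sum_(δ : {ffun 'I_n -> 'I_H.+1}) (F \in family (Dfam δ) : nat))).
  apply: leq_sum => F; rewrite inE => /asboolP /mem [δ hδ].
  by rewrite (bigD1 δ) //= hδ.
apply: (@leq_trans (\sum_F \sum_(δ : {ffun 'I_n -> 'I_H.+1}) (F \in family (Dfam δ) : nat))).
  by rewrite [X in (_ <= X)%N](bigID (fun F => F \in [set F | `[< P F >]])) /= leq_addr.
rewrite exchange_big /=; apply: leq_sum => δ _.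
by rewrite -sum1_card [X in (_ <= X)%N]big_mkcond /=; apply: leq_sum => F _; case: (F \in _).
Qed.
End Count.


Section Lower.
Variables (n : nat) (F : parent_map n) (ρ : 'I_n -> nat).
Hypothesis hρ : forall v u, F v = Some u -> (ρ u < ρ v)%N.

Lemma rank_up j v : up F j v = None \/ exists u, up F j v = Some u /\ (ρ u + j <= ρ v)%N.
Proof.
elim: j => [|j [IH|[u [e le]]]]; first by right; exists v; rewrite addn0.
- by left; rewrite upS IH.
rewrite upS e /=; case h: (F u) => [w|]; [right | by left].
by exists w; split => //; have := hρ h; lia.
Qed.

Lemma rank_forest : is_forest F.
Proof.
move=> v; exists (ρ v).+1; case: (rank_up (ρ v).+1 v) => // [[u [_ le]]]; lia.
Qed.

Lemma rank_anc u w : strict_ancestor F u w -> (ρ u < ρ w)%N.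
Proof.
move=> [j [j0 e]]; case: (rank_up j w); first by rewrite e.
move=> [u' [e' le]]; move: e'; rewrite e => -[eu]; rewrite -eu in le; lia.
Qed.
End Lower.

Lemma incr_ge k (f : 'I_k -> 'I_k) : (forall i j : 'I_k, (i < j)%N -> (f i < f j)%N) ->
  forall i : 'I_k, (i <= f i)%N.
Proof.
move=> hf; case: k f hf => [|k] f hf i; first by case: i.
have: forall m (hm : (m < k.+1)%N), (m <= f (Ordinal hm))%N.
  elim=> [//|m IH] hm.
  have hm' : (m < k.+1)%N by apply: ltnW.
  have := hf (Ordinal hm') (Ordinal hm) (ltnSn m); have := IH hm'; lia.
by move=> /(_ i (ltn_ord i)); rewrite (_ : Ordinal _ = i) //; apply: val_inj.
Qed.

Lemma perm_mono_id k (p : {perm 'I_k}) : (forall i j, (p i < p j)%N = (i < j)%N) -> p = 1%g.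
Proof.
move=> hp; apply/permP => i; rewrite perm1; apply/val_inj/eqP; rewrite eqn_leq.
have h1 : forall i : 'I_k, (i <= p i)%N by apply: incr_ge => a b lt; rewrite hp.
have h2 : forall i : 'I_k, (i <= p^-1%g i)%N.
  apply: incr_ge => a b lt; rewrite -hp !permKV //.
have := h2 (p i); rewrite permK => ->; by rewrite h1.
Qed.

Lemma chain_mono k (g : 'I_k -> nat) :
  (forall (i : 'I_k) (Hi : (i.+1 < k)%N), (g i < g (Ordinal Hi))%N) ->
  forall i j, (g i < g j)%N = (i < j)%N.
Proof.
move=> hc.
have lt : forall (i : 'I_k) m (hm : (m < k)%N), (i < m)%N -> (g i < g (Ordinal hm))%N.
  move=> i; elim=> [//|m IH] hm lim.
  have hm' : (m < k)%N by apply: ltnW.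
  have c := hc (Ordinal hm') hm.
  case: (ltngtP i m) => [h|h|e]; last 1 first.
  - by rewrite (_ : i = Ordinal hm') //; apply: val_inj.
  - by apply: ltn_trans (IH hm' h) c.
  - lia.
move=> i j; case: (ltngtP i j) => [h|h|/val_inj ->]; last by rewrite ltnn.
  by rewrite (_ : j = Ordinal (ltn_ord j)) ?lt //; apply: val_inj.
apply/negbTE; rewrite -leqNgt ltnW //.
by rewrite (_ : i = Ordinal (ltn_ord i)) ?lt //; apply: val_inj.
Qed.

Section Avoid.
Variable SS : pattern_set.
Hypothesis HS : forall k (p : {perm 'I_k}), @SS k p -> (0 < k)%N.

Lemma inc_avoid n (F : parent_map n) :
  (forall v u, F v = Some u -> (u < v)%N) ->
  (forall k, (0 < k)%N -> ~ @SS k (increasing_pattern k)) -> avoids F SS.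
Proof.
move=> hF hS k p Sp [w [hc ho]].
have mono := chain_mono (g := fun i => nat_of_ord (w i))
  (fun i Hi => rank_anc (ρ := fun v => nat_of_ord v) hF (hc i Hi)).
apply: (hS k (HS Sp)); rewrite /increasing_pattern -(_ : p = 1%g) //.
by apply: perm_mono_id => i j; rewrite -ho mono.
Qed.

Lemma dec_avoid n (F : parent_map n) :
  (forall v u, F v = Some u -> (v < u)%N) ->
  (forall k, (0 < k)%N -> ~ @SS k (decreasing_pattern k)) -> avoids F SS.
Proof.
move=> hF hS k p Sp [w [hc ho]].
have hF' : forall v u, F v = Some u -> (n - u < n - v)%N.
  by move=> v u e; have := hF v u e; have := ltn_ord u; lia.
have mono := chain_mono (g := fun i => (n - nat_of_ord (w i))%N)
  (fun i Hi => rank_anc (ρ := fun v => (n - nat_of_ord v)%N) hF' (hc i Hi)).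
apply: (hS k (HS Sp)); rewrite /decreasing_pattern.
pose rv : {perm 'I_k} := perm (@rev_ord_inj k).
have q1 : (p * rv = 1)%g.
  apply: perm_mono_id => i j; rewrite !permM !permE /=.
  have -> : (k - (p i).+1 < k - (p j).+1)%N = (p j < p i)%N.
    by have := ltn_ord (p i); have := ltn_ord (p j); lia.
  rewrite -ho -mono.
  by have := ltn_ord (w i); have := ltn_ord (w j); lia.
have rr : (rv * rv = 1)%g by apply/permP => i; rewrite permM !permE rev_ordK.
have ep : p = rv by rewrite -[p]mulg1 -rr mulgA q1 mul1g.
by move: Sp; rewrite ep.
Qed.
End Avoid.

Lemma fam_card_ge n (D : 'I_n -> pred (option 'I_n)) (w : 'I_n -> nat) :
  (forall v, w v <= #|D v|)%N -> (\prod_v w v <= #|family D|)%N.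
Proof.
move=> h; rewrite card_family foldrE big_map big_enum /=.
by apply: leq_prod => v _; exact: h.
Qed.

Lemma fact_ord n : (\prod_(v < n) (nat_of_ord v).+1)%N = n`!.
Proof. by rewrite fact_prod big_add1 big_mkord. Qed.

Lemma fact_ord_rev n : (\prod_(v < n) (n - nat_of_ord v))%N = n`!.
Proof.
rewrite -fact_ord (reindex_inj (@rev_ord_inj n)) /=; apply: eq_bigr => v _.
rewrite /= ; have := ltn_ord v; lia.
Qed.

Lemma f_lower (SS : pattern_set) (HS : forall k (p : {perm 'I_k}), SS k p -> (0 < k)%N) :
  ((forall k, (0 < k)%N -> ~ SS k (increasing_pattern k)) \/
   (forall k, (0 < k)%N -> ~ SS k (decreasing_pattern k))) ->
  forall n, (n`! <= f_count SS n)%N.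
Proof.
move=> hS n; rewrite /f_count.
case: hS => hS.
  pose D (v : 'I_n) : pred (option 'I_n) := fun o => if o is Some u then (u < v)%N else true.
  apply: (@leq_trans #|family D|).
    rewrite -fact_ord; apply: fam_card_ge => v.
    have hv : (v <= n)%N by apply: ltnW.
    pose f (o : option 'I_v) : option 'I_n := omap (widen_ord hv) o.
    have finj : injective f.
      move=> [a|] [b|] //= [] e; congr Some; exact: val_inj e.
    have := card_imset [set: option 'I_v] finj; rewrite cardsT card_option card_ord => <-.
    apply: subset_leq_card; apply/fintype.subsetP => o /finset.imsetP [x _ ->].
    by case: x => [x|] //=; rewrite unfold_in /D /=.
  apply: subset_leq_card; apply/fintype.subsetP => G hG; rewrite inE; apply/asboolP.
  have hG' : forall v u, G v = Some u -> (u < v)%N.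
    by move=> v u e; move/familyP: hG => /(_ v); rewrite unfold_in /D e.
  split; first exact: (rank_forest (ρ := fun v => nat_of_ord v) hG').
  exact: inc_avoid.
pose D (v : 'I_n) : pred (option 'I_n) := fun o => if o is Some u then (v < u)%N else true.
apply: (@leq_trans #|family D|).
  rewrite -fact_ord_rev; apply: fam_card_ge => v.
  have hlt : forall i : 'I_(n - v.+1), (v.+1 + i < n)%N.
    by move=> i; have := ltn_ord i; have := ltn_ord v; lia.
  pose f (o : option 'I_(n - v.+1)) : option 'I_n := omap (fun i => Ordinal (hlt i)) o.
  have finj : injective f.
    move=> [a|] [b|] //= [] e; congr Some; apply: val_inj; move: e; rewrite /=; lia.
  have := card_imset [set: option 'I_(n - v.+1)] finj; rewrite cardsT card_option card_ord.
  have -> : (n - v.+1).+1 = (n - v)%N by have := ltn_ord v; lia.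
  move=> <-.
  apply: subset_leq_card; apply/fintype.subsetP => o /finset.imsetP [x _ ->].
  by case: x => [x|] //=; rewrite unfold_in /D /=; lia.
apply: subset_leq_card; apply/fintype.subsetP => G hG; rewrite inE; apply/asboolP.
have hG' : forall v u, G v = Some u -> (n - u < n - v)%N.
  move=> v u e; move/familyP: hG => /(_ v); rewrite unfold_in /D e.
  by have := ltn_ord u; lia.
split; first exact: (rank_forest (ρ := fun v => (n - nat_of_ord v)%N) hG').
by apply: dec_avoid => // v u e; move/familyP: hG => /(_ v); rewrite unfold_in /D e.
Qed.

Local Open Scope ring_scope.

Section Real.
Variable R : realType.

Lemma x_le_expR (x : R) : x <= expR x.
Proof. by apply: le_trans (expR_ge1Dx x); rewrite lerDr. Qed.

Lemma pow_le (a t : R) (b m : nat) : 0 <= a -> 0 < t -> (b <= m)%N ->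
  a ^+ b <= (t * m%:R) ^+ b * expR (a / t).
Proof.
move=> a0 t0 bm; case: b bm => [|b] bm.
  rewrite !expr0 mul1r; apply: le_trans (expR_ge1Dx _).
  by rewrite lerDl divr_ge0 // ltW.
have tb0 : 0 < t * b.+1%:R by rewrite mulr_gt0.
rewrite {1}(_ : a = (t * b.+1%:R) * (a / (t * b.+1%:R))); last by rewrite mulrC divfK // gt_eqF.
rewrite exprMn; apply: ler_pM.
- by rewrite exprn_ge0 // ltW.
- by rewrite exprn_ge0 // divr_ge0 // ltW.
- apply: lerXn2r; [by rewrite nnegrE ltW | | ].
    by rewrite nnegrE; apply: mulr_ge0; [exact: ltW | exact: ler0n].
  by apply: ler_wpM2l; [exact: ltW | rewrite ler_nat].
have -> : a / t = a / (t * b.+1%:R) * b.+1%:R.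
  by rewrite invfM mulrA divfK // pnatr_eq0.
rewrite expRM_natr; apply: lerXn2r; [by rewrite nnegrE divr_ge0 // ltW | by rewrite nnegrE expR_ge0 | exact: x_le_expR].
Qed.
End Real.


Lemma prod_part (R : comPzRingType) n H (δ : 'I_n -> 'I_H.+1) (f : 'I_H.+1 -> R) :
  \prod_v f (δ v) = \prod_i f i ^+ #|[set u | δ u == i]|.
Proof.
rewrite (partition_big δ xpredT) //=; apply: eq_bigr => i _.
rewrite (eq_bigr (fun _ => f i)); last by move=> v /eqP ->.
by rewrite -prodr_const; apply: eq_bigl => v; rewrite inE.
Qed.

Section RB.
Variable R : realType.
Fixpoint rr (ε : R) (j : nat) : R :=
  if j is j'.+1 then ε * expR (- (rr ε j')^-1) else ε.

Lemma rr_pos ε j : 0 < ε -> 0 < rr ε j.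
Proof. by move=> e0; elim: j => //= j IH; rewrite mulr_gt0 // expR_gt0. Qed.

Lemma ind_sum H (f : nat -> R) m : (forall i, 0 <= f i) ->
  \sum_(i < H.+1) ((m == i :> nat)%:R * f i) <= f m.
Proof.
move=> f0; case: (ltnP m H.+1) => h.
  rewrite (bigD1 (Ordinal h)) //= eqxx mul1r big1 ?addr0 // => i ne.
  case: eqP => [e|]; last by rewrite mul0r.
  by move: ne; rewrite (_ : i = Ordinal h) ?eqxx //; apply: val_inj.
rewrite big1 ?f0 // => i _.
case: eqP => [e|]; last by rewrite mul0r.
by have := ltn_ord i; rewrite -e ltnNge h.
Qed.

Lemma prod_bound (H : nat) (ε : R) : 0 < ε -> exists C : R, 0 < C /\
  forall n (δ : {ffun 'I_n -> 'I_H.+1}), ((\prod_v cW δ v)%:R : R) <= C * (ε * n%:R) ^+ n.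
Proof.
move=> e0; pose t i := rr ε (H.+1 - i).
have t0 i : 0 < t i by exact: rr_pos.
have trel i : (i <= H)%N -> t i * expR ((t i.+1)^-1) = ε.
  by move=> hi; rewrite /t subSS subSn //= -mulrA -expRD addNr expR0 mulr1.
exists (expR (\sum_(i < H.+1) (t i)^-1)); split; first exact: expR_gt0.
move=> n δ.
pose c' (i : nat) := #|[set u | (δ u).+1 == i]|.
rewrite natr_prod (eq_bigr (fun v => ((1 + c' (δ v))%N)%:R)) //.
rewrite (prod_part (fun v => δ v) (fun i => ((1 + c' i)%N)%:R : R)).
apply: (@le_trans _ _ (\prod_(i < H.+1) ((t i * n%:R) ^+ #|[set u | δ u == i]|
    * expR (((1 + c' i)%N)%:R / t i)))).
  apply: ler_prod => i _; rewrite exprn_ge0 ?ler0n //=.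
  apply: pow_le; [exact: ler0n | exact: t0 | ].
  by rewrite -[n in (_ <= n)%N]card_ord max_card.
rewrite big_split /= -expR_sum.
rewrite -(prod_part (fun v => δ v) (fun i => t i * n%:R)).
have hexp : \sum_(i < H.+1) ((1 + c' i)%N)%:R / t i <=
    \sum_(i < H.+1) (t i)^-1 + \sum_v (t (δ v).+1)^-1.
  under eq_bigr do rewrite natrD mulrDl mul1r.
  rewrite big_split /= lerD2l.
  have ce i : (c' i)%:R = \sum_v (((δ v).+1 == i :> nat)%:R : R).
    by rewrite /c' -sum1dep_card big_mkcond natr_sum /=; apply: eq_bigr => v _; case: ifP.
  under eq_bigr do rewrite ce mulr_suml.
  rewrite exchange_big /=; apply: ler_sum => v _.
  have := @ind_sum H (fun i => (t i)^-1) (δ v).+1; apply => i; by rewrite invr_ge0 ltW.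
apply: (@le_trans _ _ ((\prod_v (t (δ v) * n%:R)) *
    expR (\sum_(i < H.+1) (t i)^-1 + \sum_v (t (δ v).+1)^-1))).
  apply: ler_pM; [ | exact: expR_ge0 | exact: lexx | by rewrite ler_expR].
  by apply: prodr_ge0 => v _; rewrite mulr_ge0 ?ler0n // ltW.
rewrite expRD mulrCA ler_pM2l ?expR_gt0 // expR_sum -big_split /=.
rewrite (eq_bigr (fun _ => ε * n%:R)) ?prodr_const ?card_ord //.
move=> v _; rewrite mulrAC trel //; have := ltn_ord (δ v); by rewrite ltnS.
Qed.
End RB.


Lemma f_upper (R : realType) (SS : pattern_set) k l : (0 < k)%N -> (0 < l)%N ->
  SS k (increasing_pattern k) -> SS l (decreasing_pattern l) ->
  forall ε : R, 0 < ε -> exists C : R, 0 < C /\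
    forall n, (f_count SS n)%:R <= C * (ε * n%:R) ^+ n.
Proof.
case: k => // K; case: l => // L _ _ hk hl ε e0.
pose H := (K * L)%N.
have hpos : 0 < ε / H.+1%:R by rewrite divr_gt0 // ltr0n.
have [C [C0 hC]] := prod_bound H hpos.
exists C; split => // n.
have cb := @count_bound n H (fun F => is_forest F /\ avoids F SS).
have := cb (fun F '(conj fo av) => height_bound fo (av _ _ hk) (av _ _ hl)).
rewrite -(ler_nat R) natr_sum => h; apply: (le_trans h).
apply: (le_trans (ler_sum _ (fun δ _ => hC n δ))).
rewrite sumr_const card_ffun !card_ord -[_ *+ (H.+1 ^ n)%N]mulr_natr natrX -[C * _ * _]mulrA -exprMn.
by rewrite mulrAC divfK ?pnatr_eq0.
Qed.

Local Open Scope classical_set_scope.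

Section Fin.
Variable R : realType.

Lemma powR_root (x : R) n : 0 <= x -> (0 < n)%N -> (x ^+ n) `^ (n%:R^-1) = x.
Proof.
move=> x0 n0; rewrite -powR_mulrn // -powRrM mulfV ?pnatr_eq0 -?lt0n //; exact: powRr1.
Qed.

Lemma fact_lb n : (0 < n)%N -> (n%:R ^+ n / expR n%:R : R) <= n`!%:R.
Proof.
case: n => // m _.
have := @expR_ge1Dxn R m.+1%:R m (ler0n _ _).
move=> h; rewrite ler_pdivrMr ?expR_gt0 //.
have hf : (0 : R) < m.+1`!%:R by rewrite ltr0n fact_gt0.
rewrite mulrC -ler_pdivrMr //; apply: le_trans h; rewrite lerDr //.
Qed.
End Fin.

Unset Implicit Arguments.
Theorem proposition5p9 (R : realType) (S : pattern_set)
  (HS : forall k (p : {perm 'I_k}), S k p -> (0 < k)%N) :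
  ((fun n : nat => ((f_count S n)%:R `^ (n%:R^-1) / n%:R : R)) @ \oo --> (0 : R))
  <-> (exists k l : nat, [/\ (0 < k)%N, (0 < l)%N,
         S k (increasing_pattern k) & S l (decreasing_pattern l)]).
Proof.
split.
- move=> hc.
  have key : ((forall k, (0 < k)%N -> ~ S k (increasing_pattern k)) \/
     (forall k, (0 < k)%N -> ~ S k (decreasing_pattern k))) -> False.
    move=> hor; have lb := f_lower HS hor.
    have e0 : (0 : R) < (expR 1)^-1 by rewrite invr_gt0 expR_gt0.
    move/cvgrPdist_lt: hc => /(_ _ e0) hn.
    have : \forall n \near \oo, (1 <= n)%N /\
        `|0 - (f_count S n)%:R `^ (n%:R^-1) / n%:R| < (expR 1)^-1 :> R.
      near=> n; split; [near: n; exact: nbhs_infty_ge | near: n; exact: hn].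
    move=> [N _ hN]; have [n1 hlt] := hN N (leqnn N).
    move: hlt; apply/negP; rewrite -leNgt sub0r normrN.
    have nR : (0 : R) < N%:R by rewrite ltr0n.
    rewrite ger0_norm ?divr_ge0 ?powR_ge0 ?ler0n // ler_pdivlMr //.
    rewrite mulrC -[X in X <= _](@powR_root R (N%:R / expR 1) N) ?divr_ge0 ?ler0n ?expR_ge0 //.
    apply: ge0_ler_powR; rewrite ?nnegrE ?invr_ge0 ?ler0n ?exprn_ge0 ?divr_ge0 ?expR_ge0 //.
    apply: (@le_trans _ _ (N`!%:R)); last by rewrite ler_nat lb.
    by rewrite exprMn exprVn -expRM_natl mulr1; exact: fact_lb.
  case: (pselect (exists k, (0 < k)%N /\ S k (increasing_pattern k))) => [[k [k0 hk]]|hI];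
  case: (pselect (exists k, (0 < k)%N /\ S k (decreasing_pattern k))) => [[l [l0 hl]]|hD].
  + by exists k, l.
  + by exfalso; apply: key; right => j j0 hj; apply: hD; exists j.
  + by exfalso; apply: key; left => j j0 hj; apply: hI; exists j.
  + by exfalso; apply: key; left => j j0 hj; apply: hI; exists j.
- move=> [k [l [k0 l0 hk hl]]]; apply/cvgrPdist_lt => η η0.
  have e0 : (0 : R) < η / 4 by rewrite divr_gt0.
  have [C [C0 hC]] := f_upper k0 l0 hk hl e0.
  near=> n.
  have n1 : (1 <= n)%N by near: n; exact: nbhs_infty_ge.
  have Cn : C <= n%:R by near: n; exact: nbhs_infty_ger.
  have nR : (0 : R) < n%:R by rewrite ltr0n.
  rewrite sub0r normrN ger0_norm ?divr_ge0 ?powR_ge0 ?ler0n //.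
  have fb : (f_count S n)%:R <= (2 * (η / 4 * n%:R)) ^+ n.
    apply: (le_trans (hC n)); rewrite [X in _ <= X]exprMn; apply: ler_pM; [exact: ltW| | |exact: lexx].
      by rewrite exprn_ge0 // mulr_ge0 ?ler0n // ltW.
    apply: (le_trans Cn); rewrite -natrX ler_nat; apply: ltnW; exact: ltn_expl.
  apply: (@le_lt_trans _ _ (2 * (η / 4))); last by lra.
  rewrite ler_pdivrMr //.
  apply: (@le_trans _ _ (((2 * (η / 4 * n%:R)) ^+ n) `^ (n%:R^-1))).
    apply: ge0_ler_powR => //; rewrite ?nnegrE ?invr_ge0 ?ler0n //.
    by rewrite exprn_ge0 // mulr_ge0 // mulr_ge0 ?ler0n // ltW.
  rewrite powR_root; [by rewrite mulrA | | exact: n1].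
  by rewrite mulr_ge0 // mulr_ge0 ?ler0n // ltW.
Unshelve. all: end_near.
Qed.
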